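(* Let $G=\{1,\rho\}\le S_n$ be a 2-element subgroup whose non-identity element $\rho$ is a product of pairwise disjoint transpositions. Then $B_n/G$ is a symmetric chain order.
   Context: A finite poset $P$ is ranked if it has a minimum element and all saturated chains from the minimum to any $x$ have the same length $r(x)$; $r(P)=\max_x r(x)$. A chain $x_1<\dots<x_k$ is symmetric if it is saturated and $r(x_1)+r(x_k)=r(P)$; a symmetric chain order (SCO) is a ranked poset that can be partitioned into symmetric chains. $B_n$ is the Boolean lattice of subsets of $[n]$; $S_n$ acts by $\sigma(A)=\sigma[A]$, and for $G\le S_n$, $B_n/G$ is the poset of $G$-orbits $[A]$ with $[A]\le[B]$ iff $X\subseteq Y$ for some $X\in[A]$, $Y\in[B]$. *)

(* Defs.v *)
From mathcomp Require Import all_boot all_order all_fingroup.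
Set Implicit Arguments. Unset Strict Implicit. Unset Printing Implicit Defensive.

Section RankedPosets.
Variables (T : finType) (le : rel T).

Definition plt (x y : T) : bool := le x y && (x != y).

Definition covers (x y : T) : bool :=
  plt x y && ~~ [exists z, plt x z && plt z y].

Definition is_rank_function (r : T -> nat) : Prop :=
  exists m : T, (forall y, le m y) /\
    forall (x : T) (p : seq T), path covers m p -> last m p = x -> size p = r x.

Definition ranked : Prop := exists r, is_rank_function r.

Definition poset_rank (r : T -> nat) : nat := \max_(x : T) r x.

Definition symmetric_chain (r : T -> nat) (x : T) (c : seq T) : bool :=
  path covers x c && (r x + r (last x c) == poset_rank r).

(* symmetric chain order: ranked, and partitioned into symmetric chains
   (chains given as nonempty sequences x :: c) *)
Definition SCO : Prop :=
  exists r, is_rank_function r /\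
    exists cs : seq (T * seq T),
      all (fun xc => symmetric_chain r xc.1 xc.2) cs /\
      perm_eq (flatten [seq xc.1 :: xc.2 | xc <- cs]) (enum T).
End RankedPosets.

Section Quotient.
Variables (n : nat) (G : {set {perm 'I_n}}).

Definition orbitB (A : {set 'I_n}) : {set {set 'I_n}} :=
  [set (fun i : 'I_n => s i) @: A | s : {perm 'I_n} in G].

Definition is_orbitB (X : {set {set 'I_n}}) : bool :=
  [exists A : {set 'I_n}, X == orbitB A].

Definition BquotT : finType := {X : {set {set 'I_n}} | is_orbitB X}.

Definition Bquot_le : rel BquotT :=
  fun X Y => [exists A in val X, exists B in val Y, A \subset B].
End Quotient.

Definition disjoint_transpositions_product (n : nat) (rho : {perm 'I_n}) : Prop :=
  exists s : seq ('I_n * 'I_n),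
    [/\ s != [::], all (fun p => p.1 != p.2) s,
        uniq (flatten [seq [:: p.1; p.2] | p <- s]) &
        rho = (\prod_(p <- s) tperm p.1 p.2)%g].

(* Main.v *)
Require Import Defs.
From mathcomp Require Import all_boot all_order all_fingroup.
From mathcomp Require Import zify.
Set Implicit Arguments. Unset Strict Implicit. Unset Printing Implicit Defensive.

Lemma uniq_flatten_key (T I : eqType) (k : T -> I) (ts : seq I) (B : I -> seq T) :
  uniq ts -> (forall t, t \in ts -> uniq (B t)) ->
  (forall t x, t \in ts -> x \in B t -> k x = t) -> uniq (flatten (map B ts)).
Proof.
elim: ts => [//|t ts IH] /= /andP[tn uts] uB kB.
rewrite cat_uniq uB ?mem_head // IH //; last first.
- by move=> t' x H; apply: kB; rewrite inE H orbT.
- by move=> t' H; apply: uB; rewrite inE H orbT.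
rewrite andbT; apply/hasPn => x /flatten_mapP[t' t'in xin]; apply/negP => xt.
have t'in2 : t' \in t :: ts by rewrite inE t'in orbT.
have := kB t x (mem_head _ _) xt; have := kB t' x t'in2 xin.
by move=> -> e; move: tn; rewrite -e t'in.
Qed.

Definition upto k := locked (iota 0 k.+1).
Lemma mem_upto x a : (x \in upto a) = (x <= a).
Proof. by rewrite /upto -lock mem_iota. Qed.
Lemma upto_uniq a : uniq (upto a).
Proof. by rewrite /upto -lock iota_uniq. Qed.

Definition gidx (a b t k : nat) : nat * nat :=
  if k <= b - t then (t, k) else (t + (k - (b - t)), b - t).
Definition gchain a b t := mkseq (gidx a b t) (b - t + 1 + (a - t)).
Definition gchains a b := [seq gchain a b t | t <- [seq t <- upto a | t <= b]].

Definition tidx (m t k : nat) : nat * nat :=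
  if k <= m - t - t then (t, t + k) else (t + (k - (m - t - t)), m - t).
Definition tchain m t := mkseq (tidx m t) (m - t - t + 1 + (m - t - t)).
Definition tchains m := [seq tchain m t | t <- [seq t <- upto m | t + t <= m]].

Definition gall a b := [seq (i, j) | i <- upto a, j <- upto b].
Definition tall m := [seq (p, q) | p <- upto m, q <- iota p (m.+1 - p)].

Lemma mem_gchain a b t x : t <= a -> t <= b ->
  (x \in gchain a b t) = [&& x.1 <= a, x.2 <= b & minn x.1 (b - x.2) == t].
Proof.
move=> ta tb; apply/idP/idP.
  case/mapP=> k; rewrite mem_iota /gidx => /andP[_ kl] ->.
  case: ifP => /= kb; apply/and3P; split; lia.
case: x => i j /= /and3P[ia jb /eqP mt]; apply/mapP.
case: (leqP i (b - j)) => h.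
  exists j; first by rewrite mem_iota; lia.
  by rewrite /gidx ifT; [congr pair; lia | lia].
exists (b - t + (i - t)); first by rewrite mem_iota; lia.
by rewrite /gidx ifF; [congr pair; lia | lia].
Qed.

Lemma uniq_gchain a b t : uniq (gchain a b t).
Proof.
rewrite /gchain /tchain /mkseq; rewrite map_inj_in_uniq ?iota_uniq //.
move=> k1 k2; rewrite !mem_iota /gidx => /andP[_ h1] /andP[_ h2].
by case: ifP; case: ifP => ? ? [] ?; lia.
Qed.

Lemma gchains_perm a b : perm_eq (flatten (gchains a b)) (gall a b).
Proof.
apply: uniq_perm.
- apply: (uniq_flatten_key (k := fun x => minn x.1 (b - x.2))).
  + by apply: filter_uniq; apply: upto_uniq.
  + by move=> *; apply: uniq_gchain.
  + move=> t x; rewrite mem_filter mem_upto => /andP[tb ta].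
    rewrite mem_gchain; [by case/and3P=> _ _ /eqP | lia | done].
- by apply: allpairs_uniq; [apply: upto_uniq | apply: upto_uniq | move=> [? ?] [? ?] _ _ []  -> ->].
move=> [i j]; apply/flatten_mapP/allpairsP => [[t] | [[i' j'] [] ]].
  rewrite mem_filter mem_upto => /andP[tb ta]; rewrite mem_gchain /=; [|lia|done].
  case/and3P=> ia jb _; exists (i, j); split => //; rewrite /= ?mem_upto ?mem_iota /=; lia.
rewrite /= ?mem_upto ?mem_iota /= => ? ? [-> ->]; exists (minn i' (b - j')).
  rewrite mem_filter mem_upto; apply/andP; split; lia.
rewrite mem_gchain /=; [apply/and3P; split; lia | lia | lia].
Qed.

Lemma mem_tchain m t x : t + t <= m ->
  (x \in tchain m t) = [&& x.1 <= x.2, x.2 <= m & minn x.1 (m - x.2) == t].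
Proof.
move=> tm; apply/idP/idP.
  case/mapP=> k; rewrite mem_iota /tidx => /andP[_ kl] ->.
  case: ifP => /= kb; apply/and3P; split; lia.
case: x => i j /= /and3P[ia jb /eqP mt]; apply/mapP.
case: (leqP i (m - j)) => h.
  exists (j - i); first by rewrite mem_iota; lia.
  by rewrite /tidx ifT; [congr pair; lia | lia].
exists (m - t - t + (i - t)); first by rewrite mem_iota; lia.
by rewrite /tidx ifF; [congr pair; lia | lia].
Qed.

Lemma uniq_tchain m t : uniq (tchain m t).
Proof.
rewrite /gchain /tchain /mkseq; rewrite map_inj_in_uniq ?iota_uniq //.
move=> k1 k2; rewrite !mem_iota /tidx => /andP[_ h1] /andP[_ h2].
by case: ifP; case: ifP => ? ? E; case: E => *; lia.
Qed.

Lemma tchains_perm m : perm_eq (flatten (tchains m)) (tall m).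
Proof.
apply: uniq_perm.
- apply: (uniq_flatten_key (k := fun x => minn x.1 (m - x.2))).
  + by apply: filter_uniq; apply: upto_uniq.
  + by move=> *; apply: uniq_tchain.
  + move=> t x; rewrite mem_filter mem_upto => /andP[tb ta].
    by rewrite mem_tchain //; case/and3P=> _ _ /eqP.
- rewrite /tall; apply: (uniq_flatten_key (k := fst)); first exact: upto_uniq.
  + by move=> p _; rewrite map_inj_uniq ?iota_uniq // => x y [].
  + by move=> p x _ /mapP[q _ ->].
move=> [i j]; apply/flatten_mapP/allpairsPdep => [[t] | [i' [j' [] ]]].
  rewrite mem_filter mem_upto => /andP[tb ta]; rewrite mem_tchain //=.
  case/and3P=> ia jb _; exists i, j; rewrite mem_upto mem_iota; split => //; lia.
rewrite mem_upto mem_iota => ? ? [-> ->]; exists (minn i' (m - j')).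
  rewrite mem_filter mem_upto; apply/andP; split; lia.
rewrite mem_tchain /=; [apply/and3P; split; lia | lia].
Qed.

Lemma size_gchain a b t : size (gchain a b t) = b - t + 1 + (a - t).
Proof. by rewrite size_mkseq. Qed.
Lemma nth_gchain a b t k : k < size (gchain a b t) -> nth (0,0) (gchain a b t) k = gidx a b t k.
Proof. by rewrite size_gchain => h; rewrite nth_mkseq. Qed.
Lemma size_tchain m t : size (tchain m t) = m - t - t + 1 + (m - t - t).
Proof. by rewrite size_mkseq. Qed.
Lemma nth_tchain m t k : k < size (tchain m t) -> nth (0,0) (tchain m t) k = tidx m t k.
Proof. by rewrite size_tchain => h; rewrite nth_mkseq. Qed.

Lemma gidx_prop a b t k : t <= a -> t <= b -> k < b - t + 1 + (a - t) ->
  [/\ (gidx a b t k).1 <= a, (gidx a b t k).2 <= b & (gidx a b t k).1 + (gidx a b t k).2 = t + k].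
Proof. by move=> *; rewrite /gidx; case: ifP => /= ?; split; lia. Qed.

Lemma gidx_step a b t k : t <= a -> t <= b -> k.+1 < b - t + 1 + (a - t) ->
  (gidx a b t k.+1 = ((gidx a b t k).1, (gidx a b t k).2.+1)) \/
  (gidx a b t k.+1 = ((gidx a b t k).1.+1, (gidx a b t k).2)).
Proof.
move=> *; rewrite /gidx; case: ifP => ?; case: ifP => ? /=;
  first [by left; congr pair; lia | by right; congr pair; lia | lia].
Qed.

Lemma tidx_prop m t k : t + t <= m -> k < m - t - t + 1 + (m - t - t) ->
  [/\ (tidx m t k).1 <= m, (tidx m t k).2 <= m & (tidx m t k).1 + (tidx m t k).2 = t + t + k].
Proof. by move=> *; rewrite /tidx; case: ifP => /= ?; split; lia. Qed.

Lemma tidx_step m t k : t + t <= m -> k.+1 < m - t - t + 1 + (m - t - t) ->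
  (tidx m t k.+1 = ((tidx m t k).1, (tidx m t k).2.+1)) \/
  (tidx m t k.+1 = ((tidx m t k).1.+1, (tidx m t k).2)).
Proof.
move=> *; rewrite /tidx; case: ifP => ?; case: ifP => ? /=;
  first [by left; congr pair; lia | by right; congr pair; lia | lia].
Qed.

Section Chains.
Definition goodchain (T : Type) (r : T -> nat) (cov : T -> T -> bool) (N : nat) (c : seq T) : Prop :=
  exists r0, [/\ 0 < size c, r0 + r0 + (size c).-1 = N,
     forall x0 i, i < size c -> r (nth x0 c i) = r0 + i &
     forall x0 i, i.+1 < size c -> cov (nth x0 c i) (nth x0 c i.+1)].

Definition SCDon (T : eqType) (r : T -> nat) (cov : T -> T -> bool) N (D : seq T) (cs : seq (seq T)) :=
  (forall c, c \in cs -> goodchain r cov N c) /\ perm_eq (flatten cs) D.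

Definition covP (T1 T2 : eqType) (cov1 : T1 -> T1 -> bool) (cov2 : T2 -> T2 -> bool) (u v : T1 * T2) :=
  (cov1 u.1 v.1 && (u.2 == v.2)) || ((u.1 == v.1) && cov2 u.2 v.2).
Definition rP (T1 T2 : Type) (r1 : T1 -> nat) (r2 : T2 -> nat) (u : T1 * T2) := r1 u.1 + r2 u.2.

Variables (T1 T2 : eqType) (r1 : T1 -> nat) (r2 : T2 -> nat)
  (cov1 : T1 -> T1 -> bool) (cov2 : T2 -> T2 -> bool) (x1 : T1) (x2 : T2).

Definition gm (c1 : seq T1) (c2 : seq T2) (p : nat * nat) := (nth x1 c1 p.1, nth x2 c2 p.2).
Definition gridchains c1 c2 := [seq map (gm c1 c2) ic | ic <- gchains (size c1).-1 (size c2).-1].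

Lemma grid_good N1 N2 c1 c2 : goodchain r1 cov1 N1 c1 -> goodchain r2 cov2 N2 c2 ->
  forall c, c \in gridchains c1 c2 -> goodchain (rP r1 r2) (covP cov1 cov2) (N1 + N2) c.
Proof.
move=> [r01 [s1 e1 R1 C1]] [r02 [s2 e2 R2 C2]] c /mapP[ic /mapP[t]].
rewrite mem_filter mem_upto => /andP[tb ta] -> ->.
set a := (size c1).-1 in ta *; set b := (size c2).-1 in tb *.
have sa : size c1 = a.+1 by rewrite /a; lia.
have sb : size c2 = b.+1 by rewrite /b; lia.
exists (r01 + r02 + t); split.
- by rewrite size_map size_gchain; lia.
- by rewrite size_map size_gchain; lia.
- move=> y0 k; rewrite size_map => hk.
  rewrite (nth_map (0,0)) // nth_gchain //; move: hk; rewrite size_gchain => hk.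
  have [h1 h2 h3] := gidx_prop ta tb hk.
  by rewrite /rP /gm /= R1 ?R2; lia.
- move=> y0 k; rewrite size_map => hk.
  rewrite !(nth_map (0,0)) ?nth_gchain //; try lia.
  move: hk; rewrite size_gchain => hk.
  have [h1 h2 h3] := gidx_prop ta tb (ltnW hk).
  have := gidx_prop ta tb hk.
  case: (gidx_step ta tb hk) => -> /= [h1' h2' _]; rewrite /covP /gm /=.
  + by apply/orP; right; rewrite eqxx /=; apply: C2; lia.
  + by apply/orP; left; rewrite eqxx andbT; apply: C1; lia.
Qed.

Lemma upto_nth (T : Type) (x0 : T) (c : seq T) : 0 < size c -> map (nth x0 c) (upto (size c).-1) = c.
Proof. by move=> h; rewrite /upto -lock prednK // -/(mkseq _ _) mkseq_nth. Qed.

Lemma grid_perm c1 c2 : 0 < size c1 -> 0 < size c2 ->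
  perm_eq (flatten (gridchains c1 c2)) [seq (x, y) | x <- c1, y <- c2].
Proof.
move=> s1 s2; rewrite /gridchains -map_comp.
rewrite (_ : flatten _ = map (gm c1 c2) (flatten (gchains (size c1).-1 (size c2).-1))); last first.
  by rewrite map_flatten -map_comp.
apply: (perm_trans (perm_map _ (gchains_perm _ _))).
rewrite /gall map_allpairs.
have -> : [seq (x, y) | x <- c1, y <- c2] =
    [seq gm c1 c2 (i, j) | i <- upto (size c1).-1, j <- upto (size c2).-1].
  by rewrite -{1}(upto_nth x1 s1) -{1}(upto_nth x2 s2) allpairs_mapl allpairs_mapr.
exact: perm_refl.
Qed.
End Chains.

Lemma mem_tall m p q : ((p, q) \in tall m) = (p <= q <= m).
Proof.
apply/allpairsPdep/idP => [[p' [q' []]] | h].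
  by rewrite mem_upto mem_iota => ? ? [-> ->]; lia.
by exists p, q; rewrite mem_upto mem_iota; split => //; lia.
Qed.

Lemma tall_uniq m : uniq (tall m).
Proof.
rewrite /tall; apply: (uniq_flatten_key (k := fst)); first exact: upto_uniq.
  by move=> p _; rewrite map_inj_uniq ?iota_uniq // => x y [].
by move=> p x _ /mapP[q _ ->].
Qed.

Section Tri.
Variables (T : eqType) (r : T -> nat) (cov : T -> T -> bool) (x0 : T).

Definition tm (c : seq T) (p : nat * nat) := (nth x0 c p.1, nth x0 c p.2).
Definition trichains c := [seq map (tm c) ic | ic <- tchains (size c).-1].
Definition tridom c := map (tm c) (tall (size c).-1).

Lemma tri_good N c : goodchain r cov N c ->
  forall c', c' \in trichains c -> goodchain (rP r r) (covP cov cov) (N + N) c'.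
Proof.
move=> [r0 [s1 e1 R1 C1]] c' /mapP[ic /mapP[t]].
rewrite mem_filter mem_upto => /andP[tb ta] -> ->.
set m := (size c).-1 in ta tb *.
have sa : size c = m.+1 by rewrite /m; lia.
exists (r0 + r0 + t + t); split.
- by rewrite size_map size_tchain; lia.
- by rewrite size_map size_tchain; lia.
- move=> y0 k; rewrite size_map => hk.
  rewrite (nth_map (0,0)) // nth_tchain //; move: hk; rewrite size_tchain => hk.
  have [h1 h2 h3] := tidx_prop tb hk.
  by rewrite /rP /tm /= !R1; lia.
- move=> y0 k; rewrite size_map => hk.
  rewrite !(nth_map (0,0)) ?nth_tchain //; try lia.
  move: hk; rewrite size_tchain => hk.
  have [h1 h2 h3] := tidx_prop tb (ltnW hk).
  have := tidx_prop tb hk.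
  case: (tidx_step tb hk) => -> /= [h1' h2' _]; rewrite /covP /tm /=.
  + by apply/orP; right; rewrite eqxx /=; apply: C1; lia.
  + by apply/orP; left; rewrite eqxx andbT; apply: C1; lia.
Qed.

Lemma tri_perm c : perm_eq (flatten (trichains c)) (tridom c).
Proof.
rewrite /trichains /tridom -map_comp.
rewrite (_ : flatten _ = map (tm c) (flatten (tchains (size c).-1))); last first.
  by rewrite map_flatten -map_comp.
exact: (perm_map _ (tchains_perm _)).
Qed.

Lemma mem_tridom c x y : 0 < size c -> uniq c -> (x, y) \in tridom c ->
  [/\ x \in c, y \in c & index x c <= index y c].
Proof.
move=> sc uc /mapP[[p q]]; rewrite mem_tall /tm /= => h [-> ->].
have := prednK sc.
have pc : p < size c by lia.
have qc : q < size c by lia.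
by rewrite !mem_nth // !index_uniq //; case/andP: h.
Qed.

Lemma tridom_total c x y : x \in c -> y \in c -> index x c <= index y c -> (x, y) \in tridom c.
Proof.
move=> xc yc h; apply/mapP; exists (index x c, index y c).
  by rewrite mem_tall h /=; have := index_mem y c; rewrite yc => hh; apply/ltnSE; rewrite prednK //; lia.
by rewrite /tm /= !nth_index.
Qed.

Lemma tridom_uniq c : 0 < size c -> uniq c -> uniq (tridom c).
Proof.
move=> sc uc; rewrite map_inj_in_uniq ?tall_uniq // => -[p q] [p' q'].
rewrite !mem_tall /tm /= => h h' [/eqP E1 /eqP E2].
have := prednK sc => hs.
rewrite (nth_uniq x0 _ _ uc) in E1; try lia.
rewrite (nth_uniq x0 _ _ uc) in E2; try lia.
by rewrite (eqP E1) (eqP E2).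
Qed.
End Tri.

Lemma perm_flatten_map (A B : eqType) (f g : A -> seq B) s :
  (forall x, x \in s -> perm_eq (f x) (g x)) -> perm_eq (flatten (map f s)) (flatten (map g s)).
Proof.
elim: s => //= x s IH H; rewrite perm_cat ?H ?mem_head // IH // => y ys.
by apply: H; rewrite inE ys orbT.
Qed.

Section Prod.
Variables (T1 T2 : eqType) (r1 : T1 -> nat) (r2 : T2 -> nat)
  (cov1 : T1 -> T1 -> bool) (cov2 : T2 -> T2 -> bool) (x1 : T1) (x2 : T2).

Lemma inner_perm c1 cs2 : 0 < size c1 -> (forall c2, c2 \in cs2 -> 0 < size c2) ->
  perm_eq (flatten (flatten (map (gridchains x1 x2 c1) cs2)))
          [seq (x, y) | x <- c1, y <- flatten cs2].
Proof.
move=> s1; elim: cs2 => [|c2 cs2 IH] H /=.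
  by rewrite /=; elim: c1 {s1} => //.
rewrite flatten_cat perm_sym (perm_allpairs_catr pair c1 (fun=> c2) (fun=> flatten cs2)) perm_sym.
rewrite perm_cat ?grid_perm ?H ?mem_head // IH // => c ?; apply: H.
by rewrite inE; apply/orP; right.
Qed.

Definition prodcs (cs1 : seq (seq T1)) (cs2 : seq (seq T2)) :=
  flatten [seq gridchains x1 x2 c1 c2 | c1 <- cs1, c2 <- cs2].

Lemma prod_scd N1 N2 D1 D2 cs1 cs2 :
  SCDon r1 cov1 N1 D1 cs1 -> SCDon r2 cov2 N2 D2 cs2 ->
  SCDon (rP r1 r2) (covP cov1 cov2) (N1 + N2) [seq (x, y) | x <- D1, y <- D2] (prodcs cs1 cs2).
Proof.
move=> [G1 P1] [G2 P2]; split.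
  move=> c /flattenP[cc /allpairsP[[c1 c2] [/= h1 h2 ->]]].
  exact: grid_good (G1 _ h1) (G2 _ h2) c.
apply: (perm_trans _ (perm_allpairs _ P1 P2)).
have S1 : forall c, c \in cs1 -> 0 < size c by move=> c /G1 [? []].
have S2 : forall c, c \in cs2 -> 0 < size c by move=> c /G2 [? []].
rewrite /prodcs; elim: cs1 {P1 G1} S1 => [|c1 cs1 IH] S1 //=.
rewrite allpairs_cat !flatten_cat perm_cat //.
  by apply: inner_perm => //; apply: S1; rewrite mem_head.
by apply: IH => c hc; apply: S1; rewrite inE hc orbT.
Qed.
End Prod.

Section Sym.
Variables (T : eqType) (r : T -> nat) (cov : T -> T -> bool) (x0 : T).

Fixpoint symcs (cs : seq (seq T)) : seq (seq (T * T)) :=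
  if cs is c :: cs' then trichains x0 c ++ flatten (map (gridchains x0 x0 c) cs') ++ symcs cs'
  else [::].
Fixpoint symdom (cs : seq (seq T)) : seq (T * T) :=
  if cs is c :: cs' then tridom x0 c ++ [seq (x, y) | x <- c, y <- flatten cs'] ++ symdom cs'
  else [::].

Lemma sym_scd N cs : (forall c, c \in cs -> goodchain r cov N c) ->
  SCDon (rP r r) (covP cov cov) (N + N) (symdom cs) (symcs cs).
Proof.
elim: cs => [|c cs IH] G; first by split.
have Gc := G c (mem_head _ _).
have G' : forall c', c' \in cs -> goodchain r cov N c' by move=> c' h; apply: G; rewrite inE h orbT.
have [IG IP] := IH G'.
split.
  move=> c'; rewrite /= !mem_cat => /or3P[h | /flattenP[cc /mapP[c2 h2 ->] h] | h].
  - exact: tri_good Gc _ h.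
  - exact: grid_good Gc (G' _ h2) _ h.
  - exact: IG.
rewrite /= !flatten_cat perm_cat ?tri_perm // perm_cat ?IP // inner_perm //.
  by case: Gc => ? [].
by move=> c2 /G' [? []].
Qed.

Lemma mem_symdom cs x y : (forall c, c \in cs -> 0 < size c) -> uniq (flatten cs) ->
  (x, y) \in symdom cs -> x \in flatten cs /\ y \in flatten cs.
Proof.
elim: cs => [|c cs IH] //= S U; rewrite cat_uniq in U; case/and3P: U => uc _ ucs.
have S' : forall c', c' \in cs -> 0 < size c' by move=> c' h; apply: S; rewrite inE h orbT.
rewrite !mem_cat => /or3P[h | /allpairsP[[a b] [/= ha hb [-> ->]]] | h].
- by case: (mem_tridom (S _ (mem_head _ _)) uc h) => -> -> _.
- by rewrite ha hb orbT.
- by case: (IH S' ucs h) => -> ->; rewrite !orbT.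
Qed.

Lemma symdom_uniq cs : (forall c, c \in cs -> 0 < size c) -> uniq (flatten cs) -> uniq (symdom cs).
Proof.
elim: cs => [|c cs IH] //= S U; have U0 := U; rewrite cat_uniq in U; case/and3P: U => uc dis ucs.
have S' : forall c', c' \in cs -> 0 < size c' by move=> c' h; apply: S; rewrite inE h orbT.
rewrite !cat_uniq tridom_uniq ?S ?mem_head // IH // allpairs_uniq //; last first.
  by move=> [? ?] [? ?] _ _ /= [-> ->].
rewrite !andbT /=; apply/andP; split.
  rewrite has_cat negb_or; apply/andP; split.
    apply/hasPn => -[a b] /allpairsP[[a' b'] [/= _ hb [_ ->]]].
    apply/negP => /(mem_tridom (S _ (mem_head _ _)) uc) [_ hb' _].
    by move/hasPn: dis => /(_ _ hb); rewrite hb'.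
  apply/hasPn => -[a b] /(mem_symdom S' ucs) [ha _].
  apply/negP => /(mem_tridom (S _ (mem_head _ _)) uc) [ha' _ _].
  by move/hasPn: dis => /(_ _ ha); rewrite ha'.
apply/hasPn => -[a b] /(mem_symdom S' ucs) [ha _].
apply/negP => /allpairsP[[a' b'] [/= ha' _ [E _]]]; rewrite -E in ha'.
by move/hasPn: dis => /(_ _ ha); rewrite ha'.
Qed.

Lemma symdom_total cs x y : (forall c, c \in cs -> 0 < size c) -> uniq (flatten cs) ->
  x \in flatten cs -> y \in flatten cs -> ((x, y) \in symdom cs) || ((y, x) \in symdom cs).
Proof.
elim: cs => [|c cs IH] //= S U; rewrite cat_uniq in U; case/and3P: U => uc dis ucs.
have S' : forall c', c' \in cs -> 0 < size c' by move=> c' h; apply: S; rewrite inE h orbT.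
rewrite !mem_cat => /orP[hx | hx] /orP[hy | hy].
- case: (leqP (index x c) (index y c)) => h.
    by rewrite tridom_total.
  by rewrite (tridom_total x0 hy hx) ?orbT //; lia.
- by rewrite (allpairs_f pair hx hy) orbT.
- by rewrite (allpairs_f pair hy hx) !orbT.
- by case/orP: (IH S' ucs hx hy) => ->; rewrite !orbT.
Qed.

Lemma symdom_anti cs x y : (forall c, c \in cs -> 0 < size c) -> uniq (flatten cs) ->
  (x, y) \in symdom cs -> (y, x) \in symdom cs -> x = y.
Proof.
elim: cs => [|c cs IH] //= S U; rewrite cat_uniq in U; case/and3P: U => uc dis ucs.
have S' : forall c', c' \in cs -> 0 < size c' by move=> c' h; apply: S; rewrite inE h orbT.
have Sc := S _ (mem_head _ _).
have notboth : forall a, a \in c -> a \in flatten cs -> False.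
  by move=> a h1 h2; move/hasPn: dis => /(_ _ h2); rewrite h1.
rewrite !mem_cat => /or3P[h | /allpairsP[[a b] [/= ha hb [-> ->]]] | h].
- case: (mem_tridom Sc uc h) => hx hy i1 /or3P[h' | /allpairsP[[a b] [/= ha hb [E1 E2]]] | h'].
  + case: (mem_tridom Sc uc h') => _ _ i2; apply/eqP.
    by rewrite -(nth_index x0 hx) -(nth_index x0 hy) (_ : index x c = index y c) //; lia.
  + by case: (notboth x); rewrite // E2.
  + by case: (mem_symdom S' ucs h') => _ /(notboth _ hx).
- move=> /or3P[h' | /allpairsP[[a' b'] [/= ha' hb' [E1 E2]]] | h'].
  + by case: (mem_tridom Sc uc h') => /(notboth _) /(_ hb).
  + by case: (notboth a); rewrite // E2.
  + by case: (mem_symdom S' ucs h') => _ /(notboth _ ha).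
- move=> /or3P[h' | /allpairsP[[a' b'] [/= ha' hb' [E1 E2]]] | h'].
  + by case: (mem_symdom S' ucs h) => hx _; case: (mem_tridom Sc uc h') => _ /(notboth _) /(_ hx).
  + by case: (mem_symdom S' ucs h) => _ hy; case: (notboth y); rewrite // E1.
  + exact: IH.
Qed.
End Sym.

Lemma map_scd (T T' : eqType) (r : T -> nat) cov N D cs (r' : T' -> nat) (cov' : T' -> T' -> bool)
  (h : T -> T') :
  SCDon r cov N D cs -> (forall x, x \in D -> r' (h x) = r x) ->
  (forall x y, x \in D -> y \in D -> cov x y -> cov' (h x) (h y)) ->
  SCDon r' cov' N (map h D) (map (map h) cs).
Proof.
move=> [G P] Hr Hc; split; last first.
  by rewrite -map_flatten; apply: perm_map.
move=> c' /mapP[c cin ->].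
have inD : forall y, y \in c -> y \in D.
  by move=> y yc; rewrite -(perm_mem P); apply/flattenP; exists c.
have [r0 [s1 e1 R1 C1]] := G c cin.
case: c cin s1 e1 R1 C1 inD => // y c cin s1 e1 R1 C1 inD.
exists r0; split; rewrite ?size_map //.
- move=> x0 i hi; rewrite (nth_map y) // Hr; first exact: R1.
  by apply: inD; apply: mem_nth.
- move=> x0 i hi; rewrite !(nth_map y) //; last by apply: ltnW.
  by apply: Hc; [apply: inD; apply: mem_nth; apply: ltnW | apply: inD; apply: mem_nth | apply: C1].
Qed.

Section Pow.
Variable n : nat.
Fixpoint Pw (s : seq 'I_n) : seq {set 'I_n} :=
  if s is x :: s' then Pw s' ++ map (fun S => x |: S) (Pw s') else [:: set0].
Definition covS (S S' : {set 'I_n}) := (S \subset S') && (#|S'| == #|S|.+1).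
Definition rS (S : {set 'I_n}) := #|S|.

Lemma mem_Pw s S : (S \in Pw s) = (S \subset [set i | i \in s]).
Proof.
elim: s S => [|x s IH] S /=.
  rewrite inE; apply/eqP/idP => [->|h]; first exact: sub0set.
  by apply/eqP; rewrite -subset0; apply: (subset_trans h); apply/subsetP => i; rewrite inE.
rewrite mem_cat IH; apply/orP/idP.
  case=> [h | /mapP[S' h ->]].
    by apply: (subset_trans h); apply/subsetP => i; rewrite !inE => ->; rewrite orbT.
  rewrite IH in h; apply/subsetP => i; rewrite !inE => /orP[/eqP -> | hi].
    by rewrite eqxx.
  by move/subsetP: h => /(_ _ hi); rewrite inE => ->; rewrite orbT.
move=> h; case: (boolP (x \in S)) => xS.
  right; apply/mapP; exists (S :\ x); last by rewrite setD1K.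
  rewrite IH; apply/subsetP => i; rewrite !inE => /andP[ix iS].
  by move/subsetP: h => /(_ _ iS); rewrite !inE (negbTE ix).
left; apply/subsetP => i iS; move/subsetP: h => /(_ _ iS); rewrite !inE.
by case/orP => // /eqP E; move: xS; rewrite -E iS.
Qed.

Lemma Pw_uniq s : uniq s -> uniq (Pw s).
Proof.
elim: s => [|x s IH] //= /andP[xs us].
have nx : forall S, S \in Pw s -> x \notin S.
  move=> S; rewrite mem_Pw => /subsetP h; apply/negP => /h; rewrite inE.
  by rewrite (negbTE xs).
rewrite cat_uniq IH // map_inj_in_uniq ?IH // ?andbT; last first.
  by move=> S S' hS hS' E; rewrite -(setU1K (nx _ hS)) -(setU1K (nx _ hS')) E.
apply/hasPn => _ /mapP[S hS ->]; apply/negP => /nx; rewrite setU11.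
by [].
Qed.

Definition covB (b b' : bool) := ~~ b && b'.

Lemma bool_scd : SCDon nat_of_bool covB 1 [:: false; true] [:: [:: false; true]].
Proof.
split; last exact: perm_refl.
move=> c; rewrite inE => /eqP ->; exists 0; split => //.
  by move=> x0 [|[|i]].
by move=> x0 [|i].
Qed.

Lemma pw_scd s : uniq s -> exists cs, SCDon rS covS (size s) (Pw s) cs.
Proof.
elim: s => [|x s IH] /=.
  move=> _; exists [:: [:: set0]]; split; last exact: perm_refl.
  move=> c; rewrite inE => /eqP ->; exists 0.
  split; [done | done | by move=> x0 [|i] //= _; rewrite /rS cards0 | by move=> x0 [|i]].
case/andP=> xs us; have [cs H] := IH us.
have nx : forall S, S \in Pw s -> x \notin S.
  move=> S; rewrite mem_Pw => /subsetP h; apply/negP => /h; rewrite inE.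
  by rewrite (negbTE xs).
have HP := prod_scd false set0 bool_scd H.
pose h := fun u : bool * {set 'I_n} => if u.1 then x |: u.2 else u.2.
have := map_scd (r' := rS) (cov' := covS) (h := h) HP.
rewrite add1n.
have -> : map h [seq (b, Y) | b <- [:: false; true], Y <- Pw s] = Pw s ++ map (fun Y => x |: Y) (Pw s).
  rewrite /= cats0 map_cat -!map_comp; congr (_ ++ _); by elim: (Pw s) => //= ? ? ->.
move=> HH; eexists; apply: HH.
  move=> [b Y] /allpairsP[[b' Y'] [/= _ hS [-> ->]]].
  rewrite /h /rS /rP /=; case: b' => //=.
  by rewrite cardsU1 (nx _ hS).
move=> u v hu hv; move/allpairsP: hu => [[b1 S1] [/= _ hS ->]].
move/allpairsP: hv => [[b2 S2] [/= _ hS2 ->]].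
rewrite /covP /covB /h /covS /=.
case/orP => [/andP[/andP[/negbTE -> ->] /eqP <-] | /andP[/eqP <- /andP[sub /eqP c]]].
  by rewrite subsetUr cardsU1 (nx _ hS) eqxx.
case: b1; rewrite /= ?sub ?c ?eqxx //.
apply/andP; split; first exact: setUS.
by rewrite !cardsU1 (nx _ hS) (nx _ hS2) /=; apply/eqP; lia.
Qed.
End Pow.

Section Rho.
Variable n : nat.
Definition FL (s : seq ('I_n * 'I_n)) := flatten [seq [:: p.1; p.2] | p <- s].

Lemma mem_FL s i : (i \in FL s) = (i \in map fst s) || (i \in map snd s).
Proof.
elim: s => [|q s IH] //=; rewrite /FL /= -/(FL s) !inE IH.
by case: (i == q.1); case: (i == q.2); rewrite ?orbT.
Qed.

Lemma rho_facts (s : seq ('I_n * 'I_n)) :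
  all (fun p => p.1 != p.2) s -> uniq (FL s) ->
  (forall p, p \in s -> (\prod_(q <- s) tperm q.1 q.2)%g p.1 = p.2 /\
                       (\prod_(q <- s) tperm q.1 q.2)%g p.2 = p.1) /\
  (forall i, i \notin FL s -> (\prod_(q <- s) tperm q.1 q.2)%g i = i).
Proof.
elim: s => [|q s IH] /=.
  by split => // i _; rewrite big_nil perm1.
case/andP=> q12 A; rewrite /FL /= -/(FL s) => /and3P[]; rewrite !inE negb_or.
case/andP=> q12' q1s q2s us.
have [IH1 IH2] := IH A us.
rewrite big_cons; split.
  move=> p; rewrite inE => /orP[/eqP -> | ps].
    by rewrite !permM tpermL tpermR !IH2.
  have p1 : p.1 \in FL s by rewrite mem_FL map_f.
  have p2 : p.2 \in FL s by rewrite mem_FL map_f ?orbT.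
  have ne : forall x, x \in FL s -> (q.1 != x) && (q.2 != x).
    by move=> x xs; apply/andP; split; apply/negP => /eqP E; [move: q1s | move: q2s]; rewrite E xs.
  have [n11 n21] := andP (ne _ p1); have [n12 n22] := andP (ne _ p2).
  by rewrite !permM !tpermD //; apply: IH1.
move=> i; rewrite !inE !negb_or => /and3P[iq1 iq2 iS].
rewrite permM tpermD ?IH2 //; by rewrite eq_sym.
Qed.

Lemma FL_cons q s : FL (q :: s) = q.1 :: q.2 :: FL s.
Proof. by []. Qed.

Lemma snd_not_fst (s : seq ('I_n * 'I_n)) :
  all (fun p => p.1 != p.2) s -> uniq (FL s) -> forall p, p \in s -> p.2 \notin map fst s.
Proof.
elim: s => [|q s IH] //.
move=> /andP[q12 A]; rewrite FL_cons !cons_uniq !inE negb_or.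
case/and3P=> /andP[q12' q1s] q2s us p; rewrite inE => /orP[/eqP -> | ps].
  rewrite map_cons inE negb_or eq_sym q12 /=; apply: contra q2s; rewrite mem_FL => ->.
  by [].
rewrite map_cons inE negb_or IH // andbT; apply/negP => /eqP E; move: q1s; rewrite -E mem_FL.
by rewrite (map_f snd ps) orbT.
Qed.

Lemma fst_uniq (s : seq ('I_n * 'I_n)) : uniq (FL s) -> uniq (map fst s).
Proof.
elim: s => [|q s IH] //=; rewrite /FL /= -/(FL s) => /and3P[]; rewrite !inE negb_or.
case/andP=> _ q1s _ us; rewrite IH // andbT; apply/negP => h; move: q1s.
by rewrite mem_FL h.
Qed.
End Rho.

Section Quot.
Variables (n : nat) (rho : {perm 'I_n}).
Hypothesis inv : forall i, rho (rho i) = i.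

Definition GG : {set {perm 'I_n}} := [set 1%g; rho].
Definition rA (A : {set 'I_n}) : {set 'I_n} := (fun i : 'I_n => rho i) @: A.

Lemma mem_rA A i : (i \in rA A) = (rho i \in A).
Proof.
apply/imsetP/idP => [[j jA ->] | h]; first by rewrite inv.
by exists (rho i); rewrite ?inv.
Qed.

Lemma rAK A : rA (rA A) = A.
Proof. by apply/setP => i; rewrite !mem_rA inv. Qed.

Lemma card_rA A : #|rA A| = #|A|.
Proof. by apply: card_imset; apply: perm_inj. Qed.

Lemma orbitE A : orbitB GG A = [set A; rA A].
Proof.
apply/setP => B; apply/imsetP/idP.
  move=> [s]; rewrite !inE => /orP[/eqP -> | /eqP ->] ->.
    by rewrite eqEsubset; apply/orP; left; apply/andP; split; apply/subsetP => i;
      [case/imsetP => j jA ->; rewrite perm1 | move=> iA; apply/imsetP; exists i; rewrite ?perm1].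
  by rewrite eqxx orbT.
rewrite !inE => /orP[/eqP -> | /eqP ->].
  exists 1%g; first by rewrite !inE eqxx.
  by apply/setP => i; apply/idP/imsetP => [iA | [j jA ->]]; [exists i; rewrite ?perm1 | rewrite perm1].
by exists rho; rewrite // !inE eqxx orbT.
Qed.

Definition QT := BquotT GG.
Definition qle := @Bquot_le n GG.

Lemma orbit_is (A : {set 'I_n}) : is_orbitB GG (orbitB GG A).
Proof. by apply/existsP; exists A. Qed.

Definition mkQ (A : {set 'I_n}) : QT := Sub (orbitB GG A) (orbit_is A).

Lemma val_mkQ A : val (mkQ A) = [set A; rA A].
Proof. by rewrite /= orbitE. Qed.

Lemma QT_rep (X : QT) : exists A, val X = [set A; rA A].
Proof. by case: X => X /= /existsP[A /eqP ->]; exists A; rewrite orbitE. Qed.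

Lemma QT_mem (X : QT) B : B \in val X -> val X = [set B; rA B].
Proof.
have [A ->] := QT_rep X; rewrite !inE => /orP[/eqP -> // | /eqP ->].
by rewrite rAK setUC.
Qed.

Lemma QT_eq (X Y : QT) B : B \in val X -> B \in val Y -> X = Y.
Proof. by move=> hX hY; apply: val_inj; rewrite (QT_mem hX) (QT_mem hY). Qed.

Lemma mkQ_mem A : A \in val (mkQ A).
Proof. by rewrite val_mkQ !inE eqxx. Qed.

Lemma mkQ_rA A : mkQ (rA A) = mkQ A.
Proof. by apply: (@QT_eq _ _ (rA A)); rewrite ?mkQ_mem // val_mkQ !inE eqxx orbT. Qed.

Lemma QT_mkQ (X : QT) B : B \in val X -> X = mkQ B.
Proof. by move=> h; apply: (QT_eq h); apply: mkQ_mem. Qed.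

Definition rB (X : QT) := \max_(B in val X) #|B|.

Lemma rB_mem (X : QT) B : B \in val X -> rB X = #|B|.
Proof.
move=> h; apply/eqP; rewrite eqn_leq; apply/andP; split.
  apply/bigmax_leqP => C; rewrite (QT_mem h) !inE => /orP[/eqP -> // | /eqP ->].
  by rewrite card_rA.
by rewrite /rB (bigD1 B) //= leq_maxl.
Qed.

Lemma rB_mkQ A : rB (mkQ A) = #|A|.
Proof. exact/rB_mem/mkQ_mem. Qed.

Lemma le_rank X Y : qle X Y -> rB X <= rB Y.
Proof.
case/existsP => A /andP[hA /existsP[B /andP[hB sub]]].
by rewrite (rB_mem hA) (rB_mem hB) subset_leq_card.
Qed.

Lemma plt_rank X Y : plt qle X Y -> rB X < rB Y.
Proof.
case/andP => le ne; move: (le) => /existsP[A /andP[hA /existsP[B /andP[hB sub]]]].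
rewrite (rB_mem hA) (rB_mem hB) ltn_neqAle subset_leq_card // andbT.
apply/negP => /eqP E; move/negP: ne; apply; apply/eqP.
have AB : A = B by apply/eqP; rewrite eqEcard sub E leqnn.
by apply: (QT_eq hA); rewrite AB.
Qed.

Lemma covers_rank X Y : covers qle X Y -> rB Y = (rB X).+1.
Proof.
case/andP => pl nz; have lt := plt_rank pl.
case/andP: pl => le ne; move: (le) => /existsP[A /andP[hA /existsP[B /andP[hB sub]]]].
move: lt; rewrite (rB_mem hA) (rB_mem hB) => lt.
apply/eqP; rewrite eqn_leq lt andbT leqNgt; apply/negP => big.
have : A \proper B by rewrite properEcard sub.
case/properP => _ [i iB iA].
set C := i |: A.
have cC : #|C| = #|A|.+1 by rewrite cardsU1 iA.
move/negP: nz; apply; apply/existsP; exists (mkQ C); apply/andP; split; apply/andP; split.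
- apply/existsP; exists A; rewrite hA /=; apply/existsP; exists C; rewrite mkQ_mem.
  exact: subsetUr.
- apply/negP => /eqP E; move: (rB_mkQ C); rewrite -E (rB_mem hA) cC; lia.
- apply/existsP; exists C; rewrite mkQ_mem /=; apply/existsP; exists B; rewrite hB.
  by apply/subsetP => j; rewrite !inE => /orP[/eqP -> // | /(subsetP sub)].
- apply/negP => /eqP E; move: (rB_mkQ C); rewrite E (rB_mem hB) cC; lia.
Qed.

Lemma covers_of (A B : {set 'I_n}) : A \subset B -> #|B| = #|A|.+1 -> covers qle (mkQ A) (mkQ B).
Proof.
move=> sub cB; apply/andP; split.
  apply/andP; split.
    by apply/existsP; exists A; rewrite mkQ_mem /=; apply/existsP; exists B; rewrite mkQ_mem.
  by apply/negP => /eqP E; move: (rB_mkQ A); rewrite E rB_mkQ cB; lia.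
apply/negP => /existsP[Z /andP[/plt_rank h1 /plt_rank h2]].
by move: h1 h2; rewrite !rB_mkQ cB; lia.
Qed.

Lemma rank_fun : is_rank_function qle rB.
Proof.
exists (mkQ set0); split.
  move=> Y; have [B hB] := QT_rep Y.
  apply/existsP; exists set0; rewrite mkQ_mem /=; apply/existsP; exists B.
  by rewrite hB !inE eqxx sub0set.
have gen : forall (p : seq QT) m, path (covers qle) m p -> rB (last m p) = rB m + size p.
  elim=> [|y p IH] m /=; first by rewrite addn0.
  by case/andP => c pp; rewrite IH // (covers_rank c) addnS addSn.
by move=> x p pp <-; rewrite gen // rB_mkQ cards0.
Qed.

Lemma poset_rank_n : poset_rank rB = n.
Proof.
apply/eqP; rewrite eqn_leq; apply/andP; split.
  apply/bigmax_leqP => X _; have [B hB] := QT_rep X.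
  rewrite (rB_mem (B := B)) ?hB ?inE ?eqxx //.
  by apply: (leq_trans (max_card _)); rewrite card_ord.
apply: (leq_trans _ (leq_bigmax (mkQ setT))).
by rewrite rB_mkQ cardsT card_ord.
Qed.
End Quot.

Section Final.
Variables (n : nat) (rho : {perm 'I_n}) (s : seq ('I_n * 'I_n)).
Hypotheses (Hd : all (fun p => p.1 != p.2) s) (Hu : uniq (FL s))
  (Hr : rho = (\prod_(p <- s) tperm p.1 p.2)%g).

Definition Alist := map fst s.
Definition Aset : {set 'I_n} := [set i | i \in Alist].

Lemma rfacts :
  (forall p, p \in s -> rho p.1 = p.2 /\ rho p.2 = p.1) /\
  (forall i, i \notin FL s -> rho i = i).
Proof. by rewrite Hr; apply: rho_facts. Qed.

Lemma inv : forall i, rho (rho i) = i.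
Proof.
move=> i; have [R1 R2] := rfacts.
case: (boolP (i \in FL s)) => h; last by rewrite !R2.
move: h; rewrite mem_FL => /orP[/mapP[p ps ->] | /mapP[p ps ->]].
  by case: (R1 p ps) => -> ->.
by case: (R1 p ps) => E1 E2; rewrite E2 E1.
Qed.

Lemma Arho i : i \in Aset -> rho i \notin Aset.
Proof.
have [R1 _] := rfacts; rewrite !inE => /mapP[p ps ->].
by case: (R1 p ps) => -> _; apply: snd_not_fst.
Qed.

Definition Fset : {set 'I_n} := [set i | (i \notin Aset) && (rho i \notin Aset)].

Lemma Ffix i : i \in Fset -> rho i = i.
Proof.
have [R1 R2] := rfacts; rewrite inE => /andP[h1 h2]; apply: R2.
rewrite mem_FL negb_or; apply/andP; split.
  by apply: contra h1; rewrite inE.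
apply/negP => /mapP[p ps E]; move: h2; rewrite E; case: (R1 p ps) => _ ->.
by rewrite inE map_f.
Qed.

Lemma Alist_uniq : uniq Alist.
Proof. exact: fst_uniq. Qed.

Lemma card_disj (A B : {set 'I_n}) : (forall i, i \in A -> i \notin B) -> #|A :|: B| = #|A| + #|B|.
Proof.
move=> h; rewrite cardsU (_ : A :&: B = set0) ?cards0 ?subn0 //.
by apply/setP => i; rewrite !inE; apply/negP => /andP[/h /negbTE ->].
Qed.

Section Dec.
Variables (S T W : {set 'I_n}).
Hypotheses (hS : S \subset Aset) (hT : T \subset Aset) (hW : W \subset Fset).
Definition U3 := S :|: rA rho T :|: W.

Lemma memU i : (i \in U3) = [|| i \in S, rho i \in T | i \in W].
Proof. by rewrite !in_setU (mem_rA inv); case: (i \in S). Qed.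

Lemma inS i : i \in S -> i \in Aset. Proof. exact: (subsetP hS). Qed.
Lemma inT i : i \in T -> i \in Aset. Proof. exact: (subsetP hT). Qed.
Lemma inW i : i \in W -> (i \notin Aset) && (rho i \notin Aset).
Proof. by move/(subsetP hW); rewrite inE. Qed.

Lemma dec1 : U3 :&: Aset = S.
Proof.
apply/setP => i; rewrite inE memU.
case: (boolP (i \in S)) => [/inS -> // | iS] /=.
case: (boolP (i \in Aset)) => iA; rewrite ?andbF //= andbT.
apply/negP => /orP[/inT | /inW]; first by move: (Arho iA) => /negP.
by rewrite iA.
Qed.

Lemma dec2 : rA rho (U3 :&: rA rho Aset) = T.
Proof.
apply/setP => i; rewrite (mem_rA inv) inE (mem_rA inv) memU inv.
case: (boolP (i \in Aset)) => iA; rewrite ?andbF ?andbT.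
  case: (boolP (i \in T)) => iT; rewrite ?orbT //=.
  apply/negbTE/negP => /orP[/inS | /inW /andP[_]]; first by move: (Arho iA) => /negP.
  by rewrite inv iA.
by apply/esym/negP => /inT; rewrite (negbTE iA).
Qed.

Lemma dec3 : U3 :&: Fset = W.
Proof.
apply/setP => i; rewrite inE memU.
case: (boolP (i \in W)) => iW; rewrite ?orbT.
  by rewrite (subsetP hW).
rewrite orbF inE; apply/negP => /andP[/orP[/inS -> | /inT ->]] /andP[].
  by [].
by move=> _ /negP.
Qed.

Lemma dec4 : rA rho U3 = T :|: rA rho S :|: W.
Proof.
apply/setP => i; rewrite (mem_rA inv) memU inv !in_setU (mem_rA inv).
case: (boolP (i \in W)) => iW.
  by rewrite (Ffix (subsetP hW _ iW)) iW !orbT.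
case: (boolP (rho i \in W)) => riW.
  have E := Ffix (subsetP hW _ riW); rewrite inv in E.
  by move: iW; rewrite E riW.
by rewrite !orbF orbC.
Qed.

Lemma card3 : #|U3| = #|S| + #|T| + #|W|.
Proof.
rewrite /U3 card_disj; last first.
  move=> i; rewrite in_setU (mem_rA inv) => /orP[/inS iA | /inT].
    by apply/negP => /inW; rewrite iA.
  by move=> h; apply/negP => /inW /andP[_]; rewrite h.
rewrite card_disj ?card_rA //.
by move=> i /inS iA; rewrite (mem_rA inv); apply/negP => /inT; move: (Arho iA) => /negP.
Qed.
End Dec.

Lemma recompose (U : {set 'I_n}) :
  U = U :&: Aset :|: rA rho (rA rho (U :&: rA rho Aset)) :|: U :&: Fset.
Proof.
apply/setP => i; rewrite (rAK inv) !in_setU !in_setI !(mem_rA inv) !inE.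
by case: (i \in U); case: (i \in Alist); case: (rho i \in Alist).
Qed.

End Final.

Lemma flat_hb (T : eqType) (x0 : T) (L : seq (seq T)) : (forall c, c \in L -> 0 < size c) ->
  flatten [seq x.1 :: x.2 | x <- [seq (head x0 c, behead c) | c <- L]] = flatten L.
Proof.
elim: L => [|c L IH] //= H; rewrite IH; last by move=> c' h; apply: H; rewrite inE h orbT.
by case: c H => [/(_ [::] (mem_head _ _)) | ].
Qed.

Section Main.
Variables (n : nat) (rho : {perm 'I_n}) (s : seq ('I_n * 'I_n)).
Hypotheses (Hd : all (fun p => p.1 != p.2) s) (Hu : uniq (FL s))
  (Hr : rho = (\prod_(p <- s) tperm p.1 p.2)%g).

Let inv := inv Hd Hu Hr.
Let AS := Aset s.
Let FS := Fset rho s.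

Lemma U3S (S T W S' T' W' : {set 'I_n}) : S \subset S' -> T \subset T' -> W \subset W' ->
  U3 rho S T W \subset U3 rho S' T' W'.
Proof. by move=> *; rewrite /U3 !setUSS // imsetS. Qed.

Lemma main_SCO : SCO (@Bquot_le n (GG rho)).
Proof.
have [csA [GA PA]] := pw_scd (Alist_uniq Hu).
have [csF HF] := pw_scd (enum_uniq (mem FS)).
have SA : forall c, c \in csA -> 0 < size c by move=> c /GA [? []].
have UA : uniq (flatten csA) by rewrite (perm_uniq PA) Pw_uniq // Alist_uniq.
have HS := sym_scd set0 GA.
have HP := prod_scd (set0, set0) set0 HS HF.
set Dom := [seq (x, y) | x <- symdom set0 csA, y <- Pw (enum FS)] in HP.
have inA : forall S, S \in flatten csA -> S \subset AS.
  by move=> S; rewrite (perm_mem PA) mem_Pw.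
have inF : forall W, W \in Pw (enum FS) -> W \subset FS.
  by move=> W; rewrite mem_Pw => /subsetP h; apply/subsetP => i /h; rewrite inE mem_enum.
have domP : forall u, u \in Dom -> [/\ u.1.1 \subset AS, u.1.2 \subset AS & u.2 \subset FS].
  move=> u /allpairsP[[[S T] W] [/= h1 h2 ->]] /=.
  by case: (mem_symdom SA UA h1) => /inA -> /inA ->; rewrite inF.
pose h := fun u : {set 'I_n} * {set 'I_n} * {set 'I_n} => mkQ rho (U3 rho u.1.1 u.1.2 u.2).
have Hrank : forall u, u \in Dom -> @rB n rho (h u) = rP (rP (@rS n) (@rS n)) (@rS n) u.
  move=> u /domP [h1 h2 h3]; rewrite /h (rB_mkQ inv) (card3 Hd Hu Hr h1 h2 h3).
  by rewrite /rP /rS.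
have Hcov : forall u v, u \in Dom -> v \in Dom -> covP (covP (@covS n) (@covS n)) (@covS n) u v ->
    covers (@qle n rho) (h u) (h v).
  move=> [[S T] W] [[S' T'] W'] /domP[/= a1 a2 a3] /domP[/= b1 b2 b3].
  rewrite /h /covP /covS /=; move=> H; apply: (covers_of inv).
    case/orP: H => [/andP[/orP[/andP[/andP[sS _] /eqP <-] | /andP[/eqP <- /andP[sT _]]] /eqP <-] | /andP[/eqP [<- <-] /andP[sW _]]].
    - by apply: U3S.
    - by apply: U3S.
    - by apply: U3S.
  rewrite (card3 Hd Hu Hr a1 a2 a3) (card3 Hd Hu Hr b1 b2 b3).
  case/orP: H => [/andP[/orP[/andP[/andP[_ /eqP cS] /eqP <-] | /andP[/eqP <- /andP[_ /eqP cT]]] /eqP <-] | /andP[/eqP [<- <-] /andP[_ /eqP cW]]]; by rewrite ?cS ?cT ?cW ?addSn ?addnS.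
have HQ := map_scd HP Hrank Hcov.
have EN : size (Alist s) + size (Alist s) + size (enum (mem FS)) = n.
  have := card3 Hd Hu Hr (subxx AS) (subxx AS) (subxx FS).
  have := recompose Hd Hu Hr setT; rewrite !setTI (rAK inv) => E.
  rewrite /U3 -E cardsT card_ord => EE; rewrite [RHS]EE.
  have cA : #|AS| = size (Alist s).
    by rewrite /AS /Aset cardsE; apply/card_uniqP; apply: Alist_uniq.
  by rewrite cA -cardE.
rewrite EN in HQ.
have domM : forall S T W, ((S, T), W) \in Dom -> (S, T) \in symdom set0 csA.
  by move=> S T W /allpairsP[[[S1 T1] W1] [/= h1 _ [-> -> _]]].
have UD : uniq Dom.
  apply: allpairs_uniq; [exact: symdom_uniq | exact/Pw_uniq/enum_uniq | ].
  by move=> [? ?] [? ?] _ _ /= [-> ->].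
have HD : perm_eq (map h Dom) (enum (QT rho)).
  apply: uniq_perm; last 1 first.
  - move=> X; apply/idP/idP => _; first by rewrite mem_enum.
    have [U hU] := QT_rep X.
    have XU : X = mkQ rho U by apply: (QT_mkQ inv); rewrite hU !inE eqxx.
    set S := U :&: AS; set T := rA rho (U :&: rA rho AS); set W := U :&: FS.
    have sS : S \subset AS by apply: subsetIr.
    have sT : T \subset AS.
      by apply/subsetP => i; rewrite (mem_rA inv) inE (mem_rA inv) inv => /andP[].
    have sW : W \subset FS by apply: subsetIr.
    have EU : U3 rho S T W = U by rewrite /U3 /S /T /W -recompose.
    have hS : S \in flatten csA by rewrite (perm_mem PA) mem_Pw.
    have hT : T \in flatten csA by rewrite (perm_mem PA) mem_Pw.
    have hW : W \in Pw (enum FS).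
      rewrite mem_Pw; apply/subsetP => i /(subsetP sW) iF; rewrite inE mem_enum.
      exact: iF.
    apply/mapP; case/orP: (symdom_total set0 SA UA hS hT) => H.
      by exists ((S, T), W); [apply: allpairs_f | rewrite XU /h /= EU].
    exists ((T, S), W); first by apply: allpairs_f.
    have E4 : U3 rho T S W = rA rho U by rewrite -EU (dec4 Hd Hu Hr S T sW).
    by rewrite XU /h /= E4 (mkQ_rA inv).
  - rewrite map_inj_in_uniq // => -[[S T] W] [[S' T'] W'] hu hv E.
    have [/= a1 a2 a3] := domP _ hu; have [/= b1 b2 b3] := domP _ hv.
    have : U3 rho S' T' W' \in val (mkQ rho (U3 rho S T W)).
      by rewrite /h /= in E; rewrite E mkQ_mem.
    rewrite val_mkQ !inE => /orP[/eqP EV | /eqP EV].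
      have e1 := dec1 Hd Hu Hr b1 b2 b3; have e2 := dec2 Hd Hu Hr b1 b2 b3.
      have e3 := dec3 Hd Hu Hr b1 b2 b3.
      rewrite EV (dec1 Hd Hu Hr a1 a2 a3) in e1; rewrite EV (dec2 Hd Hu Hr a1 a2 a3) in e2.
      rewrite EV (dec3 Hd Hu Hr a1 a2 a3) in e3.
      by rewrite e1 e2 e3.
    rewrite (dec4 Hd Hu Hr S T a3) -/(U3 rho T S W) in EV.
    have e1 := dec1 Hd Hu Hr b1 b2 b3; have e2 := dec2 Hd Hu Hr b1 b2 b3.
    have e3 := dec3 Hd Hu Hr b1 b2 b3.
    rewrite EV (dec1 Hd Hu Hr a2 a1 a3) in e1; rewrite EV (dec2 Hd Hu Hr a2 a1 a3) in e2.
    rewrite EV (dec3 Hd Hu Hr a2 a1 a3) in e3.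
    have m1 := domM _ _ _ hu; have m2 := domM _ _ _ hv.
    rewrite -e1 -e2 in m2.
    have ST := symdom_anti SA UA m1 m2.
    by rewrite -e1 -e2 -e3 ST.
  - exact: enum_uniq.
have [HG HPm] := HQ.
exists (@rB n rho); split; first exact: (rank_fun inv).
exists [seq (head (mkQ rho set0) c, behead c) | c <- map (map h) (prodcs (set0, set0) set0 (symcs set0 csA) csF)].
split.
  apply/allP => -[x c] /mapP[c0 hc0 [-> ->]].
  have [r0 [sz e R C]] := HG c0 hc0.
  case: c0 hc0 sz e R C => // y c1 _ _ e R C.
  rewrite /symmetric_chain /=; apply/andP; split.
    by apply/(pathP y) => i hi; apply: C.
  rewrite (poset_rank_n inv) (last_nth y) (R y 0) // (R y (size c1)) //.
  by apply/eqP; move: e => /= e; lia.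
apply: (perm_trans _ HD); apply: (perm_trans _ HPm).
rewrite flat_hb; first exact: perm_refl.
by move=> c hc; have [r0 [sz _ _ _]] := HG c hc.
Qed.
End Main.


Theorem theorem2p5 (n : nat) (rho : {perm 'I_n}) :
  disjoint_transpositions_product rho ->
  SCO (@Bquot_le n [set 1%g; rho]).
Proof.
case=> s [_ Hd Hu Hr].
exact: (main_SCO Hd Hu Hr).
Qed.
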